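(* Let $\mathfrak{g}$ be a symmetric social storage network on $N$ agents with stability point $\hat\eta$, which has evolved from the null network and has $\kappa\ge2$ connected components. Suppose $\hat\eta$ is odd and $N>\hat\eta$. If $\mathfrak{g}$ is bilaterally stable, then at least $\kappa-1$ of its components consist of an even number of agents greater than $\hat\eta$.
   Context: A network is a simple undirected graph on a finite set $\mathbf{A}$ of $N$ agents, and $\eta_i(\mathfrak{g})$ is the degree (neighbourhood size) of $i$. Parameters are: disk failure rate $\lambda\in(0,1)$, per-link cost $c$, data worths $\beta_i>0$, storage $s_i$, data size $d_i$ and budget $b_i$. Remaining storage is $RS_i=s_i-\sum_{j\text{ neighbour of }i}d_j$ and remaining budget is $RB_i=b_i-c\,\eta_i(\mathfrak{g})$. A symmetric social storage network is one of the following four types. (a) SVN with sufficient storage under the Multi-Objective Framework (MO): - $\beta_i=\beta$, with $\beta,\lambda,c\in(0,1)$; - $s_i\ge\sum_{j\ne i}d_j$; - $u_i=\beta(1-\lambda^{\eta_i})-c\eta_i$; - it is assumed that $c<\beta(1-\lambda)$ and $L=|\ln(c/(\beta(1-\lambda)))|/|\ln\lambda|$ is not an integer; the stability point is $\hat\eta=\lceil L\rceil$. (b) SV-SRN under MO: - as in (a) but with $s_i=s$ and $d_i=d$ (with $s/d$ an integer) instead of sufficient storage; - the stability point is $\hat\eta=\min\{\lceil L\rceil,s/d\}$. (c) SVN with sufficient storage and budget under the Single-Objective Framework (SO): - $\beta_i=\beta$; - $s_i\ge\sum_{j\ne i}d_j$ and $b_i\ge c(N-1)$; - $u_i=\beta(1-\lambda^{\eta_i})$;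 - the stability point is $\hat\eta=N-1$. (d) SRN under SO: - $s_i=s$, $d_i=d$, $b_i=b$ (with $s/d$ and $b/c$ integers); - $u_i=\beta_i(1-\lambda^{\eta_i})$; - the stability point is $\hat\eta=\min\{s/d,b/c\}$. Agent $i$ is willing to add the link $\langle ij\rangle$ if $u_i(\mathfrak{g}+\langle ij\rangle)>u_i(\mathfrak{g})$, together with $RS_j\ge d_i$ in types (b) and (d), and additionally $RB_i\ge c$ in type (d). Bilateral stability means both of the following hold. 1. For every link $\langle ij\rangle$: if $u_i(\mathfrak{g}-\langle ij\rangle)>u_i(\mathfrak{g})$, then $u_j(\mathfrak{g}-\langle ij\rangle)<u_j(\mathfrak{g})$. 2. For every non-link $\langle ij\rangle$: if $i$ is willing to add $\langle ij\rangle$, then $j$ is not willing to add it. $\mathfrak{g}$ has evolved from the null network if it is obtained from the network with no links by a finite sequence of single link additions $\langle ij\rangle$, each performed only when both $i$ and $j$ are willing to add it at that moment. *)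

(* Defs.v *)
From HB Require Import structures.
From mathcomp Require Import all_boot all_order all_algebra.
From mathcomp Require Import reals exp.
Set Implicit Arguments.
Unset Strict Implicit.
Unset Printing Implicit Defensive.
Import Order.TTheory GRing.Theory Num.Theory.
Local Open Scope ring_scope.

Section SSN.
Variable R : realType.
Variable A : finType.   (* the set of agents; N = #|A| *)

(* A network is a set of links, each link being the 2-element set {i,j}. *)
Definition network := {set {set A}}.
Definition null_network : network := set0.

Definition linked (g : network) (i j : A) : bool := [set i; j] \in g.
Definition add_link (g : network) (i j : A) : network := [set i; j] |: g.
Definition del_link (g : network) (i j : A) : network := g :\ [set i; j].

Definition nbrs (g : network) (i : A) : {set A} :=
  [set j | (j != i) && linked g i j].
Definition deg (g : network) (i : A) : nat := #|nbrs g i|.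

Inductive ssn :=
  (* (a) SVN with sufficient storage, MO: beta, lambda, c, s_i, d_i *)
| SVN_MO  of R & R & R & (A -> R) & (A -> R)
  (* (b) SV-SRN, MO: beta, lambda, c, s, d *)
| SVSRN_MO of R & R & R & R & R
  (* (c) SVN with sufficient storage and budget, SO: beta, lambda, c, s_i, d_i, b_i *)
| SVN_SO  of R & R & R & (A -> R) & (A -> R) & (A -> R)
  (* (d) SRN, SO: beta_i, lambda, c, s, d, b *)
| SRN_SO  of (A -> R) & R & R & R & R & R.

Definition Lval (beta lam c : R) : R :=
  `|ln (c / (beta * (1 - lam)))| / `|ln lam|.

Definition is_int (x : R) : Prop := exists z : int, x = z%:~R.
Definition is_nat (x : R) : Prop := exists m : nat, x = m%:R.

Definition ssn_valid (t : ssn) : Prop :=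
  match t with
  | SVN_MO beta lam c s d =>
      [/\ 0 < beta < 1, 0 < lam < 1, 0 < c < 1,
          (forall i, s i >= \sum_(j | j != i) d j) &
          (c < beta * (1 - lam) /\ ~ is_int (Lval beta lam c))]
  | SVSRN_MO beta lam c s d =>
      [/\ 0 < beta < 1, 0 < lam < 1, 0 < c < 1,
          0 < d /\ is_nat (s / d) &
          (c < beta * (1 - lam) /\ ~ is_int (Lval beta lam c))]
  | SVN_SO beta lam c s d b =>
      [/\ 0 < beta, 0 < lam < 1,
          (forall i, s i >= \sum_(j | j != i) d j) &
          (forall i, b i >= c * (#|A| - 1)%:R)]
  | SRN_SO beta lam c s d b =>
      [/\ (forall i, 0 < beta i), 0 < lam < 1,
          0 < d /\ is_nat (s / d) & 0 < c /\ is_nat (b / c)]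
  end.

Definition util (t : ssn) (g : network) (i : A) : R :=
  match t with
  | SVN_MO beta lam c _ _ | SVSRN_MO beta lam c _ _ =>
      beta * (1 - lam ^+ deg g i) - c * (deg g i)%:R
  | SVN_SO beta lam _ _ _ _ => beta * (1 - lam ^+ deg g i)
  | SRN_SO beta lam _ _ _ _ => beta i * (1 - lam ^+ deg g i)
  end.

Definition RS (s d : A -> R) (g : network) (i : A) : R :=
  s i - \sum_(j in nbrs g i) d j.
Definition RB (b : A -> R) (c : R) (g : network) (i : A) : R :=
  b i - c * (deg g i)%:R.

Definition willing (t : ssn) (g : network) (i j : A) : Prop :=
  util t (add_link g i j) i > util t g i /\
  match t with
  | SVN_MO _ _ _ _ _ | SVN_SO _ _ _ _ _ _ => True
  | SVSRN_MO _ _ _ s d => RS (fun _ => s) (fun _ => d) g j >= d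
  | SRN_SO _ _ c s d b =>
      RS (fun _ => s) (fun _ => d) g j >= d /\ RB (fun _ => b) c g i >= c
  end.

(* Stability point hat-eta (a real number; an integer under the hypotheses). *)
Definition stab_point (t : ssn) : R :=
  match t with
  | SVN_MO beta lam c _ _ => (Num.ceil (Lval beta lam c))%:~R
  | SVSRN_MO beta lam c s d => Num.min (Num.ceil (Lval beta lam c))%:~R (s / d)
  | SVN_SO _ _ _ _ _ _ => (#|A| - 1)%:R
  | SRN_SO _ _ c s d b => Num.min (s / d) (b / c)
  end.

Definition bilaterally_stable (t : ssn) (g : network) : Prop :=
  (forall i j, i != j -> linked g i j ->
     util t (del_link g i j) i > util t g i ->
     util t (del_link g i j) j < util t g j) /\
  (forall i j, i != j -> ~~ linked g i j ->
     willing t g i j -> ~ willing t g j i).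

Inductive evolved (t : ssn) : network -> Prop :=
| ev_null : evolved t null_network
| ev_add g i j : evolved t g -> i != j -> ~~ linked g i j ->
    willing t g i j -> willing t g j i -> evolved t (add_link g i j).

Definition component (g : network) (x : A) : {set A} :=
  [set y | connect (linked g) x y].
Definition components (g : network) : {set {set A}} :=
  [set component g x | x in A].

Definition odd_real (x : R) : Prop := exists k : nat, x = (2 * k + 1)%:R.

End SSN.

(* Main.v *)
Require Import Defs.
From HB Require Import structures.
From mathcomp Require Import all_boot all_order all_algebra.
From mathcomp Require Import reals exp.
From mathcomp Require Import zify ring lra.
Set Implicit Arguments. Unset Strict Implicit.
Import Order.TTheory GRing.Theory Num.Theory.
Local Open Scope ring_scope.

Section RealL.
Variable R : realType.

Lemma incrMO (beta lam c : R) (k : nat) : 0 < beta -> 0 < lam < 1 -> 0 < c ->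
  c < beta * (1 - lam) ->
  (beta * (1 - lam ^+ k) - c * k%:R < beta * (1 - lam ^+ k.+1) - c * (k.+1)%:R)
  = ((k%:Z) < Num.ceil (Lval beta lam c)).
Proof.
move=> b0 /andP[l0 l1] c0 cb.
rewrite ceil_gt_int.
have -> : (k%:Z)%:~R = k%:R :> R by [].
rewrite -subr_gt0.
have -> : beta * (1 - lam ^+ k.+1) - c * (k.+1)%:R - (beta * (1 - lam ^+ k) - c * k%:R)
   = beta * (1 - lam) * lam ^+ k - c.
  by rewrite exprS -addn1 natrD; ring.
have bl : 0 < beta * (1 - lam) by rewrite mulr_gt0 // subr_gt0.
rewrite subr_gt0.
set q := c / (beta * (1 - lam)).
have -> : (c < beta * (1 - lam) * lam ^+ k) = (q < lam ^+ k).
  by rewrite /q ltr_pdivrMr // mulrC.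
have q0 : 0 < q by rewrite divr_gt0.
have q1 : q < 1 by rewrite ltr_pdivrMr // mul1r.
have lk : 0 < lam ^+ k by rewrite exprn_gt0.
rewrite -ltr_ln ?posrE // lnXn //.
rewrite /Lval -/q.
have lq : ln q < 0 by apply: ln_lt0; rewrite q0 q1.
have ll : ln lam < 0 by apply: ln_lt0; rewrite l0 l1.
rewrite (ltr0_norm lq) (ltr0_norm ll).
rewrite ltr_pdivlMr ?oppr_gt0 //.
rewrite -mulr_natr mulrN ltrN2 mulrC.
by rewrite mul1r mulr_natr.
Qed.
End RealL.
Section Graph.
Variable A : finType.
Implicit Types (g : network A) (i j x y z : A).

Lemma linkedC g i j : linked g i j = linked g j i.
Proof. by rewrite /linked setUC. Qed.

Lemma in_nbrs g i j : (j \in nbrs g i) = (j != i) && linked g i j.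
Proof. by rewrite inE. Qed.

Lemma linked_add g i j x y :
  linked (add_link g i j) x y = ([set x; y] == [set i; j]) || linked g x y.
Proof. by rewrite /linked /add_link !inE. Qed.

Lemma pair_eq_mem x y i j : [set x; y] = [set i; j] -> (x == i) || (x == j).
Proof.
move=> e; have : x \in [set x; y] by rewrite !inE eqxx.
by rewrite e !inE.
Qed.

Lemma pair_eq_mem2 x y i j : [set x; y] = [set i; j] -> (y == i) || (y == j).
Proof.
move=> e; have : y \in [set x; y] by rewrite !inE eqxx orbT.
by rewrite e !inE.
Qed.

Lemma nbrs_add_other g i j x : x != i -> x != j ->
  nbrs (add_link g i j) x = nbrs g x.
Proof.
move=> xi xj; apply/setP=> y; rewrite !in_nbrs linked_add.
case: (@eqP _ [set x; y] [set i; j]) => [/pair_eq_mem|_] //.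
by rewrite (negbTE xi) (negbTE xj).
Qed.

Lemma nbrs_add_self g i j : i != j ->
  nbrs (add_link g i j) i = j |: nbrs g i.
Proof.
move=> ij; apply/setP=> y; rewrite !inE linked_add.
case: (eqVneq y j) => [->|yj] /=; first by rewrite eq_sym ij eqxx.
case: (eqVneq y i) => //= yi.
case: eqP => // e.
have := pair_eq_mem2 e.
by rewrite (negbTE yi) (negbTE yj).
Qed.

Lemma deg_add_self g i j : i != j -> ~~ linked g i j ->
  deg (add_link g i j) i = (deg g i).+1.
Proof.
move=> ij nl; rewrite /deg nbrs_add_self // cardsU1 in_nbrs.
by rewrite (negbTE nl) andbF.
Qed.

Lemma add_linkC g i j : add_link g i j = add_link g j i.
Proof. by rewrite /add_link (setUC [set i]). Qed.

Lemma deg_add_other g i j x : x != i -> x != j ->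
  deg (add_link g i j) x = deg g x.
Proof. by move=> xi xj; rewrite /deg nbrs_add_other. Qed.

Lemma deg_null x : deg (null_network A) x = 0%N.
Proof.
rewrite /deg; apply/eqP; rewrite cards_eq0; apply/eqP/setP=> y.
by rewrite !inE /linked /null_network inE andbF.
Qed.

Lemma deg_lt_notlinked g i j : i != j -> ~~ linked g i j ->
  (deg g i < #|A| - 1)%N.
Proof.
move=> ij nl.
have sub : nbrs g i \subset ~: [set i; j].
  apply/subsetP=> y; rewrite in_nbrs !inE => /andP[yi l].
  rewrite negb_or yi /=; apply/eqP=> yj; by rewrite -yj l in nl.
have := subset_leq_card sub; have := cardsC [set i; j]; rewrite cards2 ij /deg.
move=> h1 h2; lia.
Qed.

Lemma linked_sym g : symmetric (linked g).
Proof. by move=> x y; rewrite linkedC. Qed.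

Lemma comp_connect g x y : y \in component g x -> connect (linked g) x y.
Proof. by rewrite inE. Qed.

Lemma comp_same g x y : y \in component g x -> component g y = component g x.
Proof.
move=> /comp_connect cxy; apply/setP=> z; rewrite !inE.
rewrite (same_connect (sym_connect_sym (@linked_sym g)) cxy) //.
Qed.

Lemma comp_self g x : x \in component g x.
Proof. by rewrite inE connect0. Qed.

Lemma comp_nbrs g x y z : y \in component g x -> z \in nbrs g y ->
  z \in component g x.
Proof.
rewrite !inE => cxy /andP[_ l]; exact: connect_trans cxy (connect1 l).
Qed.

End Graph.
Section Par.
Variable A : finType.
Implicit Types (g : network A).

Lemma even_comp g (C : {set A}) n :
  (forall y z, y \in C -> z \in nbrs g y -> z \in C) ->
  (forall y, y \in C -> deg g y = n) -> odd n -> ~~ odd #|C|.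
Proof.
move=> clo dn on.
pose b y z : nat := z \in nbrs g y.
have bsym y z : b y z = b z y.
  by rewrite /b !inE eq_sym linkedC.
have F y : y \in C -> deg g y = \sum_(z in C) b y z.
  move=> yC; rewrite /deg -sum1_card.
  rewrite [RHS](eq_bigr (fun z => if z \in nbrs g y then 1 else 0)%N); last first.
    by move=> z _; rewrite /b; case: (z \in nbrs g y).
  rewrite -big_mkcondr; apply: eq_bigl => z.
  by apply/idP/andP=> [h|[]//]; split=> //; exact: clo h.
have E : (\sum_(y in C) \sum_(z in C) b y z = #|C| * n)%N.
  rewrite -sum_nat_const; apply: eq_bigr => y yC; by rewrite -F // dn.
pose o := @enum_rank A.
have S y z : b y z = (b y z * (o y < o z) + b y z * (o z < o y))%N.
  rewrite /b; case: (boolP (z \in nbrs g y)) => //=; rewrite inE => /andP[zy _].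
  have : o y != o z by apply: contra zy => /eqP/enum_rank_inj ->.
  move=> ne; case: ltngtP ne => // /val_inj ->; by rewrite eqxx.
have : (\sum_(y in C) \sum_(z in C) b y z =
        \sum_(y in C) \sum_(z in C) (b y z * (o y < o z))
      + \sum_(y in C) \sum_(z in C) (b y z * (o z < o y)))%N.
  rewrite -big_split; apply: eq_bigr => y _; rewrite -big_split.
  by apply: eq_bigr => z _; exact: S.
have X : (\sum_(y in C) \sum_(z in C) (b y z * (o z < o y)) =
           \sum_(y in C) \sum_(z in C) (b y z * (o y < o z)))%N.
  rewrite exchange_big; apply: eq_bigr => y _; apply: eq_bigr => z _.
  by rewrite bsym.
rewrite X addnn E => /(congr1 odd); rewrite odd_double oddM on andbT => ->. by [].
Qed.
End Par.
Section Real2.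
Variable R : realType.
Variable A : finType.

Lemma incrSO (beta lam : R) (k : nat) : 0 < beta -> 0 < lam < 1 ->
  beta * (1 - lam ^+ k) < beta * (1 - lam ^+ k.+1).
Proof.
move=> b0 /andP[l0 l1]; rewrite -subr_gt0.
have -> : beta * (1 - lam ^+ k.+1) - beta * (1 - lam ^+ k) = beta * (1 - lam) * lam ^+ k.
  by rewrite exprS; ring.
by rewrite !mulr_gt0 ?subr_gt0 ?exprn_gt0.
Qed.

Lemma condRS (s d : R) (m k : nat) : 0 < d -> s / d = m%:R ->
  (d <= s - d * k%:R) = (k < m)%N.
Proof.
move=> d0 sd.
have -> : s = m%:R * d by rewrite -sd divfK // gt_eqF.
rewrite lerBrDr.
have -> : d + d * k%:R = (k.+1)%:R * d by rewrite -addn1 natrD; ring.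
by rewrite ler_pM2r // ler_nat.
Qed.

Lemma RS_eq (s d : R) (g : network A) j :
  RS (fun _ => s) (fun _ => d) g j = s - d * (deg g j)%:R.
Proof. by rewrite /RS sumr_const mulr_natr. Qed.

Lemma mutual (t : ssn R A) g i j (n : nat) : ssn_valid t -> stab_point t = n%:R ->
  i != j -> ~~ linked g i j ->
  (willing t g i j /\ willing t g j i) <-> ((deg g i < n)%N /\ (deg g j < n)%N).
Proof.
move=> val sp ij nl.
have ji : j != i by rewrite eq_sym.
have nl' : ~~ linked g j i by rewrite linkedC.
have di := deg_add_self ij nl.
have dj := deg_add_self ji nl'.
have ci := deg_lt_notlinked ij nl.
have cj := deg_lt_notlinked ji nl'.
rewrite -!(ltr_nat R) -sp.
move: val; case: t sp => [beta lam c s d|beta lam c s d|beta lam c s d b|beta lam c s d b] /= sp.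
- case=> /andP[b0 _] l /andP[c0 _] _ [cb _].
  rewrite /willing /util di dj !incrMO // -!(ltr_int R).
  by split=> [[[h1 _] [h2 _]]|[h1 h2]].
- case=> /andP[b0 _] l /andP[c0 _] [d0 [m sm]] [cb _].
  have cs k := @condRS s d m k d0 sm.
  rewrite /willing /util di dj !incrMO // -!(ltr_int R) !RS_eq !cs.
  rewrite sm !lt_min.
  split=> [[[h1 h2] [h3 h4]]|[/andP[h1 h2] /andP[h3 h4]]].
    by rewrite !ltr_nat h2 h4 !andbT; split; [exact: h1|exact: h3].
  by move: h2 h4; rewrite !ltr_nat => h2 h4; do !split.
- case=> b0 l _ _.
  rewrite /willing /util di dj !incrSO // !ltr_nat ci cj.
  by do !split.
- case=> b0 l [d0 [m sm]] [c0 [m' bm]].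
  have cs k := @condRS s d m k d0 sm.
  have cb k := @condRS b c m' k c0 bm.
  rewrite /willing /util di dj !incrSO // !RS_eq /RB !cs !cb.
  rewrite sm bm !lt_min !ltr_nat.
  split=> [[[_ [h1 h2]] [_ [h3 h4]]]|[/andP[h1 h2] /andP[h3 h4]]].
    by split; apply/andP; split.
  by do !split.
Qed.
End Real2.

Theorem corollary4 (R : realType) (A : finType) (t : ssn R A) (g : network A) :
  ssn_valid t ->
  evolved t g ->
  (2 <= #|components g|)%N ->
  odd_real (stab_point t) ->
  stab_point t < (#|A|)%:R ->
  bilaterally_stable t g ->
  (#|components g| - 1 <=
     #|[set C in components g | ~~ odd #|C| & (stab_point t < (#|C|)%:R)%R]|)%N.
Proof.
move=> val ev k2 [k spk] _ [_ stab].
set n := (2 * k + 1)%N in spk.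
have on : odd n by rewrite /n addn1 /= mul2n odd_double.
have inv : forall g', evolved t g' -> forall x, (deg g' x <= n)%N.
  move=> g' {}ev; elim: ev => [|g1 i j ev1 IH ij nl wi wj] x.
    by rewrite deg_null.
  have [h1 h2] := (mutual val spk ij nl).1 (conj wi wj).
  case: (eqVneq x i) => [->|xi]; first by rewrite deg_add_self.
  case: (eqVneq x j) => [->|xj].
    by rewrite add_linkC deg_add_self 1?eq_sym // linkedC.
  by rewrite deg_add_other // IH.
have {}inv := inv g ev.
have nodef x y : x != y -> (deg g x < n)%N -> (deg g y < n)%N -> linked g x y.
  move=> xy hx hy; case: (boolP (linked g x y)) => // nl.
  have [w1 w2] := (mutual val spk xy nl).2 (conj hx hy).
  by case: (stab x y xy nl w1 w2).
have good x : (forall y, y \in component g x -> deg g y = n) ->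
    component g x \in [set C in components g | ~~ odd #|C| & (stab_point t < (#|C|)%:R)%R].
  move=> hall; rewrite inE; apply/andP; split; first by apply: imset_f.
  apply/andP; split.
    apply: (even_comp (g := g) _ hall on) => y z; exact: comp_nbrs.
  rewrite spk ltr_nat.
  have sub : nbrs g x \subset component g x :\ x.
    apply/subsetP => y hy; rewrite !inE.
    move: hy; rewrite in_nbrs => /andP[-> l] /=; exact: connect1.
  have := subset_leq_card sub; rewrite (cardsD1 x (component g x)) comp_self.
  rewrite /deg in hall; rewrite (hall x (comp_self g x)) add1n /=.
  by move=> h; rewrite ltnS.
case: (pickP (fun x => deg g x < n)%N) => [x0 hx0 | none].
  have sub : components g :\ component g x0 \subset
      [set C in components g | ~~ odd #|C| & (stab_point t < (#|C|)%:R)%R].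
    apply/subsetP => C; rewrite in_setD1 => /andP[ne /imsetP[x _ eC]].
    rewrite eC in ne *; apply: good => y hy.
    apply/eqP; rewrite eqn_leq inv /= leqNgt; apply/negP => hy'.
    case: (eqVneq y x0) => [e|yx0].
      by move: ne; rewrite -(comp_same hy) e eqxx.
    have x0y : x0 != y by rewrite eq_sym.
    have l := nodef x0 y x0y hx0 hy'.
    have : y \in component g x0 by rewrite inE connect1.
    move/comp_same => e2; move: ne; by rewrite -(comp_same hy) e2 eqxx.
  have := subset_leq_card sub.
  rewrite (cardsD1 (component g x0) (components g)) imset_f //.
  by rewrite add1n subn1.
have sub : components g \subset
    [set C in components g | ~~ odd #|C| & (stab_point t < (#|C|)%:R)%R].
  apply/subsetP => C /imsetP[x _ ->]; apply: good => y _.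
  by apply/eqP; rewrite eqn_leq inv /= leqNgt none.
exact: leq_trans (leq_subr _ _) (subset_leq_card sub).
Qed.
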